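(* Let $U:G\to\mathrm{Aut}(\mathcal{H}_{\rm kin})$ be a unitary representation with $U(G)\subset\mathcal{P}_n$, and let $\underline U:\ell^2(G)\to\mathcal{B}(\mathcal{H}_{\rm kin})$ be its associated $*$-algebra representation. Then the following are equivalent: (1) $U$ is faithful as a group representation and $-I\notin U(G)$; (2) $\underline U$ is faithful as a $*$-algebra representation (i.e. $\ker\underline U=\{0\}$).
   Context: $\mathcal{H}_{\rm kin}=(\mathbb{C}^2)^{\otimes n}$, $\mathcal{P}_n$ is the $n$-qubit Pauli group, $G=\mathbb{Z}_2^{\times(n-k)}$ with $0<k<n$. $\ell^2(G)$ is the group algebra of $G$: formal complex linear combinations $\sum_g f(g)\,g$, with product extending $g\star h=gh$ bilinearly and involution extending $g^*=g^{-1}$ antilinearly. $\underline U$ is the unique linear map with $\underline U(g)=U(g)$ for $g\in G$. *)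

(* Defs.v *)
From mathcomp Require Import all_boot all_algebra all_field.
From mathcomp Require Import mxtens.
Set Implicit Arguments. Unset Strict Implicit. Unset Printing Implicit Defensive.
Import GRing.Theory Num.Theory.
Local Open Scope ring_scope.

(* H_kin = (C^2)^{\otimes n} is represented by C^(2^n); operators are 'M[algC]_(2^n). *)

(* single-qubit Pauli matrices, indexed by 'I_4 : 0 = I, 1 = X, 2 = Y, 3 = Z *)
Definition pauli1 (a : 'I_4) : 'M[algC]_2 :=
  \matrix_(i < 2, j < 2)
   match val a with
   | 0 => if i == j then 1 else 0
   | 1 => if i != j then 1 else 0
   | 2 => if i == j then 0 else if val i == 0 then - 'i else 'i
   | _ => if i == j then (if val i == 0 then 1 else -1) else 0
   end.

Fixpoint pauli_tens (s : seq 'I_4) : 'M[algC]_(2 ^ size s) :=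
  match s return 'M[algC]_(2 ^ size s) with
  | [::] => 1%:M
  | a :: s' => castmx (esym (expnS 2 (size s')), esym (expnS 2 (size s')))
                      (pauli1 a *t pauli_tens s')
  end.

Definition pauli_string n (s : n.-tuple 'I_4) : 'M[algC]_(2 ^ n) :=
  castmx (congr1 (expn 2) (size_tuple s), congr1 (expn 2) (size_tuple s))
         (pauli_tens s).

Definition in_pauli_group (n : nat) (M : 'M[algC]_(2 ^ n)) : Prop :=
  exists (c : 'I_4) (s : n.-tuple 'I_4), M = ('i ^+ c) *: pauli_string s.

Definition adjmx m (A : 'M[algC]_m) : 'M[algC]_m := (map_mx Num.conj A)^T.

(* The group G = Z_2^{n-k}, written additively *)
Definition Zgrp (m : nat) := 'rV['F_2]_m.

Definition unitary_rep (m N : nat) (U : Zgrp m -> 'M[algC]_N) : Prop :=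
  (forall g h : Zgrp m, U (g + h) = U g *m U h) /\
  (forall g : Zgrp m, U g *m adjmx (U g) = 1%:M).

(* group algebra l^2(G): formal C-linear combinations, i.e. functions G -> C *)
Definition group_alg (m : nat) := {ffun Zgrp m -> algC}.

Definition ulin (m N : nat) (U : Zgrp m -> 'M[algC]_N) (f : group_alg m) : 'M[algC]_N :=
  \sum_(g : Zgrp m) f g *: U g.

(* Main.v *)
Require Import Defs.
From mathcomp Require Import all_boot all_algebra all_field mxtens.
Import GRing.Theory Num.Theory.
Local Open Scope ring_scope.

Lemma castmx_tr (R : pzRingType) m m' (e : m = m') (A : 'M[R]_m) :
  \tr (castmx (e, e) A) = \tr A.
Proof. by case: m' / e; rewrite castmx_id. Qed.

Lemma castmx_1 (R : pzRingType) m m' (e : m = m') :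
  castmx (e, e) (1%:M : 'M[R]_m) = 1%:M.
Proof. by case: m' / e; rewrite castmx_id. Qed.

Lemma tr_tensmx (R : comPzRingType) m p (A : 'M[R]_m) (B : 'M[R]_p) :
  \tr (A *t B) = \tr A * \tr B.
Proof. by rewrite /mxtrace mulr_sum; apply: eq_bigr => i _; rewrite mxE. Qed.

Lemma tens11 (R : comPzRingType) m p :
  (1%:M : 'M[R]_m) *t (1%:M : 'M[R]_p) = 1%:M.
Proof.
apply/matrixP=> i j.
case: (mxtens_indexP i)=> i0 i1; case: (mxtens_indexP j)=> j0 j1.
rewrite tensmxE !mxE (can_eq (@mxtens_indexK _ _)) xpair_eqE.
by case: (i0 == j0); case: (i1 == j1); rewrite /= ?mulr1 ?mulr0 ?mul0r.
Qed.

Lemma pauli10 : pauli1 0 = 1%:M.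
Proof. by apply/matrixP => i j; rewrite !mxE /=; case: (i == j). Qed.

Lemma tr_pauli1 a : \tr (pauli1 a) = if a == 0 then 2 else 0.
Proof.
case: a => m; do 4?[case: m => [|m]] => Ha //;
rewrite /mxtrace !big_ord_recr big_ord0 /= !mxE /=.
all: by rewrite ?add0r ?addr0 ?subrr.
Qed.

Lemma tr_tens s : \tr (pauli_tens s) = if all (pred1 0) s then (2 ^ size s)%:R else 0.
Proof.
elim: s => [|a s IH] /=; first by rewrite mxtrace1.
rewrite castmx_tr tr_tensmx tr_pauli1 IH.
case: (a == 0) => /=; last by rewrite mul0r.
by case: (all _ _); rewrite ?mulr0 // expnS natrM.
Qed.

Lemma tens_all0 s : all (pred1 0) s -> pauli_tens s = 1%:M.
Proof.
elim: s => [|a s IH] //= /andP [/eqP -> /IH ->].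
by rewrite pauli10 tens11 castmx_1.
Qed.

Lemma tr_string n (s : n.-tuple 'I_4) :
  \tr (pauli_string s) = if all (pred1 0) s then (2 ^ n)%:R else 0.
Proof. by rewrite /pauli_string castmx_tr tr_tens size_tuple. Qed.

Lemma string_all0 n (s : n.-tuple 'I_4) : all (pred1 0) s -> pauli_string s = 1%:M.
Proof. by move=> /tens_all0; rewrite /pauli_string => ->; rewrite castmx_1. Qed.

Lemma addxx m (x : Zgrp m) : x + x = 0.
Proof. apply/matrixP => i j; rewrite !mxE. by rewrite -mulr2n -mulr_natr (pchar_Fp_0 (isT : prime 2)) mulr0. Qed.

Lemma sum_delta m N (U : Zgrp m -> 'M[algC]_N) g :
  \sum_(x : Zgrp m) (x == g)%:R *: U x = U g.
Proof.
rewrite (bigD1 g) //= eqxx scale1r big1 ?addr0 // => x /negbTE ->.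
by rewrite scale0r.
Qed.

Theorem mainTheorem19 (n k : nat) (hk0 : (0 < k)%N) (hkn : (k < n)%N)
  (U : Zgrp (n - k) -> 'M[algC]_(2 ^ n)) :
  unitary_rep U ->
  (forall g, in_pauli_group (U g)) ->
  ((injective U /\ (forall g, U g != - 1%:M)) <->
   (forall f : group_alg (n - k), ulin U f = 0 -> f = 0)).
Proof.
move=> [hom uni] hP.
have U0 : U 0 = 1%:M.
  have h : U 0 = U 0 *m U 0 by rewrite -hom addr0.
  have e : U 0 = U 0 *m (U 0 *m adjmx (U 0)) by rewrite uni mulmx1.
  by rewrite e mulmxA -h uni.
have UUx x : U x *m U x = 1%:M by rewrite -hom addxx.
split.
- move=> [inj nm1] f hf; apply/ffunP => h; rewrite ffunE.
  have key x : x != 0 -> \tr (U x) = 0.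
    move=> nx; have [c [s E]] := hP x.
    rewrite E mxtraceZ tr_string; case: ifP => allz; last by rewrite mulr0.
    exfalso; move: E; rewrite string_all0 // scalemx1 => E.
    have z : 'I_(2 ^ n) by exists 0%N; rewrite expn_gt0.
    have := UUx x; rewrite E -scalar_mxM => /matrixP /(_ z z).
    rewrite !mxE eqxx /= mulr1n -expr2 => /eqP; rewrite sqrf_eq1 => /orP [] /eqP ea.
    + by move: nx; rewrite (inj x 0) ?eqxx // E U0 ea.
    + by move: (nm1 x); rewrite E ea -scaleN1r scalemx1 eqxx.
  have : \tr (ulin U f *m U h) = f h * (2 ^ n)%:R.
    rewrite /ulin mulmx_suml linear_sum /= (bigD1 h) //= big1.
      by rewrite addr0 -scalemxAl UUx mxtraceZ mxtrace1.
    move=> g ngh; rewrite -scalemxAl -hom mxtraceZ key ?mulr0 //.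
    apply: contra ngh => /eqP e.
    by rewrite -[g]addr0 -(@addxx _ h) addrA e add0r.
  rewrite hf mul0mx mxtrace0 => /esym /eqP; rewrite mulf_eq0 pnatr_eq0 expn_eq0 /=.
  by rewrite orbF => /eqP.
- move=> hinj; split.
  + move=> g h e; apply/eqP; apply/negPn/negP => ne.
    pose f : group_alg (n - k) := [ffun x => (x == g)%:R - (x == h)%:R].
    have : ulin U f = 0.
      rewrite /ulin; under eq_bigr do rewrite ffunE scalerBl.
      by rewrite sumrB !sum_delta e subrr.
    move/hinj => /ffunP /(_ g); rewrite !ffunE eqxx (negbTE ne) subr0 => /eqP.
    by rewrite oner_eq0.
  + move=> g; apply/eqP => e.
    pose f : group_alg (n - k) := [ffun x => (x == 0)%:R + (x == g)%:R].
    have : ulin U f = 0.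
      rewrite /ulin; under eq_bigr do rewrite ffunE scalerDl.
      by rewrite big_split /= !sum_delta e U0 subrr.
    move/hinj => /ffunP /(_ g); rewrite !ffunE eqxx -natrD => /eqP.
    by rewrite pnatr_eq0 addn1.
Qed.
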